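(* Let $\mathfrak{B}$ be a finite subgroup of $\mathrm{SL}(2,\mathbb{C})$ closed under $B\mapsto -B$ and under transposition, and let $\mathcal{G}=\{[B]:B\in\mathfrak{B}\}$. Suppose $g=[A]\in\mathcal{G}$ has order $2$ and satisfies $[A^T]=[A]$. Then either there exists a complex matrix $M\in\mathbb{C}^{2\times 2}$ with $MM^T=I$ such that $M^TAM\in\left\{\begin{pmatrix} i&0\\0&-i\end{pmatrix},\ -\begin{pmatrix} i&0\\0&-i\end{pmatrix}\right\}$, or $g=\left[\begin{pmatrix}0&1\\-1&0\end{pmatrix}\right]$.
   Context: $[B]$ denotes the set $\{B,-B\}$; $\mathcal{G}$ is a group under $[B_1][B_2]=[B_1B_2]$ with identity $[I]$. An element $g$ has order $2$ if $g\neq[I]$ and $g^2=[I]$. A complex matrix $M$ with $MM^T=I$ is called (complex) orthogonal (this is not the unitary condition). *)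

(* Defs.v *)
From HB Require Import structures.
From mathcomp Require Import all_boot all_order all_algebra.
From mathcomp Require Import complex.
From mathcomp Require Import reals.
Set Implicit Arguments. Unset Strict Implicit. Unset Printing Implicit Defensive.
Import Order.TTheory GRing.Theory Num.Theory.
Local Open Scope ring_scope.
Local Open Scope complex_scope.

(* [A] = [B] in G, where [B] = {B, -B} *)
Definition pm_eq (F : nzRingType) (A B : 'M[F]_2) : Prop := A = B \/ A = - B.

Definition finite_SL2_subgroup (F : fieldType) (S : seq 'M[F]_2) : Prop :=
  [/\ (1%:M : 'M[F]_2) \in S,
      (forall A B, A \in S -> B \in S -> A *m B \in S),
      (forall A, A \in S -> invmx A \in S) &
      (forall A, A \in S -> \det A = 1)].

Definition diag_i_mi (R : rcfType) : 'M[R[i]]_2 :=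
  \matrix_(k < 2, l < 2)
    (if k == l then (if k == 0 :> nat then 'i else - 'i) else 0).

Definition Jmx (F : nzRingType) : 'M[F]_2 :=
  \matrix_(k < 2, l < 2)
    (if (k == 0 :> nat) && (l == 1 :> nat) then 1
     else if (k == 1 :> nat) && (l == 0 :> nat) then -1 else 0).

(* Main.v *)
Require Import Defs.
From HB Require Import structures.
From mathcomp Require Import all_boot all_order all_algebra.
From mathcomp Require Import complex reals.
From mathcomp Require Import ring.
Import Order.TTheory GRing.Theory Num.Theory.
Local Open Scope ring_scope.

Lemma ordE0 : widen_ord (leqnSn 1) ord_max = 0 :> 'I_2. Proof. exact: val_inj. Qed.
Lemma ordE1 : ord_max = 1 :> 'I_2. Proof. exact: val_inj. Qed.

Lemma det2 (F : comNzRingType) (A : 'M[F]_2) : \det A = A 0 0 * A 1 1 - A 0 1 * A 1 0.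
Proof.
rewrite (expand_det_row _ 0) !big_ord_recr big_ord0 /= add0r.
rewrite /cofactor !det_mx11 /= !mxE /=.
have e1 : lift 0 (0 : 'I_1) = 1 :> 'I_2 by apply: val_inj.
have e2 : lift ord_max (0 : 'I_1) = 0 :> 'I_2 by apply: val_inj.
rewrite ordE0 e1 e2 ordE1 expr0 expr1 mul1r mulN1r.
by rewrite mulrN.
Qed.

Lemma ord2P (i : 'I_2) : i = 0 \/ i = 1.
Proof. case: i => [[|[|k]] Hk] //; [left|right]; exact: val_inj. Qed.

Lemma mul2E (F : comNzRingType) (X Y : 'M[F]_2) i j :
  (X *m Y) i j = X i 0 * Y 0 j + X i 1 * Y 1 j.
Proof. by rewrite !mxE big_ord_recr /= big_ord_recr /= big_ord0 add0r ordE0 ordE1. Qed.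

Lemma mx2_eq (F : comNzRingType) (X Y : 'M[F]_2) :
  X 0 0 = Y 0 0 -> X 0 1 = Y 0 1 -> X 1 0 = Y 1 0 -> X 1 1 = Y 1 1 -> X = Y.
Proof.
move=> h00 h01 h10 h11; apply/matrixP => i j.
by case: (ord2P i) => ->; case: (ord2P j) => ->.
Qed.

Lemma pm_entries (F : comNzRingType) (X Y : 'M[F]_2) :
  pm_eq X Y -> exists e : F, (e = 1 \/ e = -1) /\ forall i j, X i j = e * Y i j.
Proof.
case=> ->; [exists 1 | exists (-1)]; split; auto => i j; rewrite ?mxE;
  by rewrite ?mul1r ?mulN1r.
Qed.

Section Main.
Variable R : realType.
Local Notation C := R[i].

Lemma two_neq0 : (2 : C) != 0.
Proof. by rewrite pnatr_eq0. Qed.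

Lemma sq_eq0 (x : C) : x ^+ 2 = 0 -> x = 0.
Proof. by move/eqP; rewrite expf_eq0 /= => /eqP. Qed.

Lemma double_eq0 (x : C) : x = - x -> x = 0.
Proof.
move=> h; have : 2 * x = 0 by rewrite mulr2n mulrDl mul1r {1}h addNr.
by move/eqP; rewrite mulf_eq0 (negbTE two_neq0) /= => /eqP.
Qed.

Lemma sq1 (x : C) : x ^+ 2 = 1 -> x = 1 \/ x = -1.
Proof. by move/eqP; rewrite sqrf_eq1 => /orP[/eqP|/eqP]; auto. Qed.

Lemma cs_exists (Cc S : C) : Cc ^+ 2 + S ^+ 2 = 1 ->
  exists c s : C, [/\ c ^+ 2 + s ^+ 2 = 1, c ^+ 2 - s ^+ 2 = Cc & c * s * 2 = S].
Proof.
move=> hCS.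
have [hC1|hC1] := eqVneq Cc (-1).
  exists 0, 1; have hS : S = 0.
    by apply: sq_eq0; rewrite -(addKr (Cc ^+ 2) (S ^+ 2)) hCS hC1; ring.
  by rewrite hS hC1; split; ring.
have h1C : 1 + Cc != 0.
  by apply: contra hC1; rewrite addrC addr_eq0.
pose c := sqrtc ((1 + Cc) / 2).
have hc : c ^+ 2 = (1 + Cc) / 2 by rewrite sqr_sqrtc.
have c0 : c != 0.
  apply/negP => /eqP c0; move: hc; rewrite c0 expr0n /= => /esym/eqP.
  by rewrite mulf_eq0 invr_eq0 (negbTE two_neq0) (negbTE h1C).
have hS2 : S ^+ 2 = 1 - Cc ^+ 2 by rewrite -hCS; ring.
exists c, (S / (2 * c)).
have hs : (S / (2 * c)) ^+ 2 = (1 - Cc) / 2.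
  have -> : (S / (2 * c)) ^+ 2 = S ^+ 2 / (c ^+ 2 * 4) by field.
  rewrite hc hS2; by field; rewrite ?h1C.
rewrite hs hc; split.
- by field; rewrite ?h1C ?c0.
- by field; rewrite ?h1C ?c0.
- by field; rewrite ?h1C ?c0.
Qed.
End Main.

Arguments pm_entries {F X Y}.
Arguments sq1 {R x}.
Arguments sq_eq0 {R x}.
Arguments double_eq0 {R x}.
Arguments cs_exists {R Cc S}.
Arguments mx2_eq {F X Y}.

Local Open Scope complex_scope.

Theorem mainTheorem7 (R : realType) (S : seq 'M[R[i]]_2) (A : 'M[R[i]]_2) :
  finite_SL2_subgroup S ->
  (forall B, B \in S -> - B \in S) ->
  (forall B, B \in S -> B^T \in S) ->
  A \in S ->
  ~ pm_eq A 1%:M ->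
  pm_eq (A *m A) 1%:M ->
  pm_eq A^T A ->
  (exists M : 'M[R[i]]_2, M *m M^T = 1%:M /\
      (M^T *m A *m M = diag_i_mi R \/ M^T *m A *m M = - diag_i_mi R))
  \/ pm_eq A (Jmx R[i]).
Proof.
move=> [_ _ _ hdetS] _ _ hA hnI hsq hT.
have hdet := hdetS A hA; rewrite det2 in hdet.
have [e [he hE]] := pm_entries hsq.
have e00 := hE 0 0; have e01 := hE 0 1; have e10 := hE 1 0; have e11 := hE 1 1.
rewrite !mul2E !mxE /= in e00 e01 e10 e11.
have hsum : (A 0 0 + A 1 1) ^+ 2 = 2 * e + 2.
  transitivity ((A 0 0 * A 0 0 + A 0 1 * A 1 0) + (A 1 0 * A 0 1 + A 1 1 * A 1 1)
     + 2 * (A 0 0 * A 1 1 - A 0 1 * A 1 0)); first by ring.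
  rewrite e00 e11 hdet; ring.
case: he => he; rewrite he in hsum e00 e01 e10 e11.
  exfalso; apply: hnI.
  have hs4 : (A 0 0 + A 1 1) ^+ 2 = 4 by rewrite hsum; ring.
  have hs0 : A 0 0 + A 1 1 != 0.
    apply/eqP => h0; move: hs4; rewrite h0 expr0n /= => /eqP.
    by rewrite eq_sym pnatr_eq0.
  have hb : A 0 1 = 0.
    apply/eqP.
    have : A 0 1 * (A 0 0 + A 1 1) == 0.
      by apply/eqP; transitivity (A 0 0 * A 0 1 + A 0 1 * A 1 1); [ring | rewrite e01; ring].
    by rewrite mulf_eq0 (negbTE hs0) orbF.
  have hc : A 1 0 = 0.
    apply/eqP.
    have : A 1 0 * (A 0 0 + A 1 1) == 0.
      by apply/eqP; transitivity (A 1 0 * A 0 0 + A 1 1 * A 1 0); [ring | rewrite e10; ring].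
    by rewrite mulf_eq0 (negbTE hs0) orbF.
  rewrite hb hc in e00 e11 hdet.
  have had : A 1 1 = A 0 0.
    transitivity (A 1 1 * (A 0 0 * A 1 1 - 0 * 0)); first by rewrite hdet; ring.
    transitivity (A 0 0 * (0 * 0 + A 1 1 * A 1 1)); first by ring.
    by rewrite e11; ring.
  have ha2 : A 0 0 ^+ 2 = 1 by transitivity (A 0 0 * A 0 0 + 0 * 0); [ring | rewrite e00; ring].
  case: (sq1 ha2) => ha; [left|right]; apply: mx2_eq; rewrite ?mxE /= ?hb ?hc ?had ?ha //;
    ring.
have hd : A 1 1 = - A 0 0.
  apply/eqP; rewrite -addr_eq0 addrC; apply/eqP; apply: sq_eq0; rewrite hsum; ring.
have [e2 [he2 hE2]] := pm_entries hT.
have t00 := hE2 0 0; have t01 := hE2 0 1; have t10 := hE2 1 0.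
rewrite !mxE in t00 t01 t10.
case: he2 => he2; rewrite he2 in t00 t01 t10.
  left.
  rewrite mul1r in t10.
  have hab : A 0 0 ^+ 2 + A 0 1 ^+ 2 = -1.
    rewrite -hdet hd -t10; ring.
  have [c [s [h1 h2 h3]]] : exists c s : R[i],
     [/\ c ^+ 2 + s ^+ 2 = 1, c ^+ 2 - s ^+ 2 = - 'i%C * A 0 0 & c * s * 2 = - 'i%C * A 0 1].
    apply: cs_exists.
    by rewrite !exprMn sqrrN sqr_i !mulN1r -opprD hab opprK.
  exists (\matrix_(k < 2, l < 2) (if k == l then c else if k == 0 :> nat then - s else s)).
  split.
    apply: mx2_eq; rewrite !mul2E !mxE /= ?mxE /=.
    - by rewrite -h1; ring.
    - by ring.
    - by ring.
    - by rewrite -h1; ring.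
  left; rewrite /diag_i_mi.
  apply: mx2_eq; rewrite !mul2E !mxE /= ?mxE /= ?hd -?t10.
  - transitivity (A 0 0 * (c ^+ 2 - s ^+ 2) + A 0 1 * (c * s * 2)); first by ring.
    rewrite h2 h3.
    transitivity (- 'i%C * (A 0 0 ^+ 2 + A 0 1 ^+ 2)); first by ring.
    by rewrite hab; ring.
  - transitivity (A 0 1 * (c ^+ 2 - s ^+ 2) - A 0 0 * (c * s * 2)); first by ring.
    by rewrite h2 h3; ring.
  - transitivity (A 0 1 * (c ^+ 2 - s ^+ 2) - A 0 0 * (c * s * 2)); first by ring.
    by rewrite h2 h3; ring.
  - transitivity (- (A 0 0 * (c ^+ 2 - s ^+ 2) + A 0 1 * (c * s * 2))); first by ring.
    rewrite h2 h3.
    transitivity ('i%C * (A 0 0 ^+ 2 + A 0 1 ^+ 2)); first by ring.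
    by rewrite hab mulrN1; reflexivity.
right.
have hc : A 1 0 = - A 0 1 by rewrite t10; ring.
have ha : A 0 0 = 0 by apply: double_eq0; rewrite {1}t00; ring.
have hb2 : A 0 1 ^+ 2 = 1 by rewrite -hdet hd ha hc; ring.
case: (sq1 hb2) => hb; [left|right]; apply: mx2_eq; rewrite ?mxE /= ?hd ?ha ?hc ?hb //; ring.
Qed.
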